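(* Let $d\ge1$ and let $0<\alpha_1\le\alpha_2\le\dots\le\alpha_d<1$. Then the simplices $S_{\alpha_1},\dots,S_{\alpha_d}\subset\mathbb R^d$ have a common point.
   Context: Let $e_1,\dots,e_d$ be the standard basis of $\mathbb R^d$. For $0\le\alpha\le1$, $S_\alpha$ is the $(d-1)$-dimensional simplex (convex hull) with vertices $v_k=e_1+\dots+e_{k-1}+\alpha e_k$ for $k=1,\dots,d$. *)

(* Defs.v *)
From HB Require Import structures.
From mathcomp Require Import all_boot all_order all_algebra.
Set Implicit Arguments. Unset Strict Implicit. Unset Printing Implicit Defensive.
Import Order.TTheory GRing.Theory Num.Theory.
Local Open Scope ring_scope.

Definition simplex_vertex (R : realFieldType) (d : nat) (a : R) (k : 'I_d) : 'rV[R]_d :=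
  \row_(j < d) (if (j < k)%N then 1 else if j == k then a else 0).

Definition in_S (R : realFieldType) (d : nat) (a : R) (x : 'rV[R]_d) : Prop :=
  exists w : 'I_d -> R,
    (forall k, 0 <= w k) /\ \sum_(k < d) w k = 1 /\
    x = \sum_(k < d) w k *: simplex_vertex a k.

(* Main.v *)
Require Import Defs.
From HB Require Import structures.
From mathcomp Require Import all_boot all_order all_algebra.
From mathcomp Require Import ring lra.
Import Order.TTheory GRing.Theory Num.Theory.
Local Open Scope ring_scope.

Section G.
Context {R : realFieldType}.

Fixpoint G (s : seq R) (j : nat) : R :=
  match s with
  | [::] => if j is 0%N then 1 else 0
  | a :: s' => if j is j'.+1 then a * G s' j' + (1 - a) * G s' j else 1
  end.

Lemma G0 s : G s 0 = 1. Proof. by case: s. Qed.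

Lemma G_big s j : (size s < j)%N -> G s j = 0.
Proof.
elim: s j => [|a s IH] [|j] //= H.
by rewrite !IH ?mulr0 ?addr0 // ltnW.
Qed.

Lemma G_split s1 a s2 j :
  G (s1 ++ a :: s2) j.+1 = a * G (s1 ++ s2) j + (1 - a) * G (s1 ++ s2) j.+1.
Proof.
elim: s1 j => [|b s1 IH] j //=.
case: j => [|j].
  by rewrite !IH !G0; ring.
by rewrite !IH; ring.
Qed.

Lemma G_bnd s : (forall a, a \in s -> 0 <= a <= 1) ->
  forall j, 0 <= G s j.+1 /\ G s j.+1 <= G s j /\ G s j <= 1.
Proof.
elim: s => [|a s IH] Hs j /=.
  by case: j => //=; lra.
have /andP [Ha0 Ha1] := Hs a (mem_head _ _).
have IH' := IH (fun b Hb => Hs b ltac:(by rewrite inE Hb orbT)).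
case: j => [|j].
  have [h1 [h2 h3]] := IH' 0%N. rewrite G0 in h2 h3 *. nra.
have [h1 [h2 h3]] := IH' j. have [k1 [k2 k3]] := IH' j.+1.
case: j h1 h2 h3 k1 k2 k3 => [|j] h1 h2 h3 k1 k2 k3; rewrite ?G0 in h1 h2 h3 k1 k2 k3 *; nra.
Qed.

Lemma tele (T : nat -> R) m n : (m <= n)%N ->
  \sum_(m <= k < n) (T k - T k.+1) = T m - T n.
Proof.
elim: n => [|n IH]; first by rewrite leqn0 => /eqP ->; rewrite big_geq // subrr.
rewrite leq_eqVlt => /orP [/eqP ->|]; first by rewrite big_geq // subrr.
rewrite ltnS => H; rewrite big_nat_recr //= IH //; ring.
Qed.

End G.

Theorem lemma2p2 (R : realFieldType) (d : nat) (alpha : 'I_d -> R) :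
  (0 < d)%N ->
  (forall i, 0 < alpha i) ->
  (forall i, alpha i < 1) ->
  (forall i j : 'I_d, (i <= j)%N -> alpha i <= alpha j) ->
  exists x : 'rV[R]_d, forall i, in_S (alpha i) x.
Proof.
move=> d0 a0 a1 _.
exists (\row_(j < d) G [seq alpha k | k <- enum 'I_d] j.+1) => i.
have : exists e1 e2, enum 'I_d = e1 ++ i :: e2.
  by case/splitPr: {1}(enum 'I_d) / (mem_enum 'I_d i) => e1 e2; exists e1, e2.
case=> e1 [e2 He].
have Hsz : size (e1 ++ e2) = d.-1.
  have := size_enum_ord d; rewrite He !size_cat /= => E; by rewrite -[in RHS]E addnS.
set r := [seq alpha k | k <- e1 ++ e2].
have Hr : forall a, a \in r -> 0 <= a <= 1.
  move=> a /mapP [k _ ->]; apply/andP; split; [exact: ltW | exact: ltW].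
pose T n := G r n.
have Td : T d = 0 by rewrite /T G_big // size_map Hsz prednK.
exists (fun k : 'I_d => T k - T k.+1); split; [|split].
- move=> k; have [_ [h _]] := G_bnd r Hr k; rewrite subr_ge0; exact: h.
- rewrite -(big_mkord xpredT (fun k => T k - T k.+1)) tele // Td /T G0; ring.
apply/rowP => j; rewrite mxE summxE.
rewrite /simplex_vertex. under eq_bigr => k _ do rewrite !mxE.
rewrite He map_cat /= G_split -map_cat -/r -/(T j) -/(T j.+1).
rewrite (bigD1 j) //= ltnn eqxx.
have -> : \sum_(k < d | k != j) (T k - T k.+1) *
     (if (j < k)%N then 1 else if j == k then alpha i else 0)
   = \sum_(k < d) (if (j < k)%N then T k - T k.+1 else 0).
  rewrite [RHS](bigD1 j) //= ltnn add0r; apply: eq_bigr => k Hk.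
  rewrite eq_sym (negbTE Hk); case: ifP => _; ring.
rewrite -(big_mkord xpredT (fun k => if (j < k)%N then T k - T k.+1 else 0)).
rewrite (@big_cat_nat _ _ _ j.+1) //=.
rewrite big_nat_cond big1 ?add0r; last first.
  by move=> k /andP[/andP[_ H] _]; rewrite ltnNge -ltnS H.
rewrite (@eq_big_nat _ _ _ j.+1 d _ (fun k => T k - T k.+1)); last first.
  by move=> k /andP[H _]; rewrite H.
rewrite tele // Td; ring.
Qed.
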